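(* Let $S$ be a monoid and let $A\xrightarrow{f}B\xrightarrow{g}C$ be a Rees short exact sequence of right $S$-acts. Then $B_S$ is artinian (resp. noetherian, Rees artinian, Rees noetherian) if and only if both $A_S$ and $C_S$ are artinian (resp. noetherian, Rees artinian, Rees noetherian).
   Context: A sequence $A\xrightarrow{f}B\xrightarrow{g}C$ of $S$-act homomorphisms is a Rees short exact sequence if $f$ is injective, $g$ is surjective, and $\ker g=\mathcal K_{\mathrm{Im} f}$, where $\ker g=\{(b,b'):g(b)=g(b')\}$ and $\mathcal K_{\mathrm{Im}f}=(f(A)\times f(A))\cup\Delta_B$ with $\Delta_B=\{(b,b):b\in B\}$. A right $S$-act is artinian (noetherian) if its lattice of congruences satisfies the descending (ascending) chain condition; Rees artinian (Rees noetherian) if its subacts satisfy the descending (ascending) chain condition. *)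

(* Defs.v *)
Record monoid := Monoid {
  mcarrier :> Type;
  mmul : mcarrier -> mcarrier -> mcarrier;
  mone : mcarrier;
  mmulA : forall x y z, mmul x (mmul y z) = mmul (mmul x y) z;
  mmul1s : forall x, mmul mone x = x;
  mmuls1 : forall x, mmul x mone = x
}.

Record ract (S : monoid) := RAct {
  acarrier :> Type;
  aact : acarrier -> S -> acarrier;
  aact1 : forall x, aact x (mone S) = x;
  aactM : forall x s t, aact (aact x s) t = aact x (mmul S s t)
}.
Arguments aact {S} _ _ _.

Definition is_hom {M : monoid} (X Y : ract M) (h : X -> Y) : Prop :=
  forall x s, h (aact X x s) = aact Y (h x) s.

Definition is_congruence {M : monoid} (X : ract M) (r : X -> X -> Prop) : Prop :=
  (forall x, r x x) /\ (forall x y, r x y -> r y x) /\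
  (forall x y z, r x y -> r y z -> r x z) /\
  (forall x y s, r x y -> r (aact X x s) (aact X y s)).

(* Subacts: subsets closed under the action (the empty set is allowed; this
   does not affect the chain conditions). *)
Definition is_subact {M : monoid} (X : ract M) (P : X -> Prop) : Prop :=
  forall x s, P x -> P (aact X x s).

Definition artinian {M : monoid} (X : ract M) : Prop :=
  forall r : nat -> X -> X -> Prop,
    (forall n, is_congruence X (r n)) ->
    (forall n x y, r (S n) x y -> r n x y) ->
    exists N, forall n, N <= n -> forall x y, r n x y <-> r N x y.

Definition noetherian {M : monoid} (X : ract M) : Prop :=
  forall r : nat -> X -> X -> Prop,
    (forall n, is_congruence X (r n)) ->
    (forall n x y, r n x y -> r (S n) x y) ->
    exists N, forall n, N <= n -> forall x y, r n x y <-> r N x y.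

Definition rees_artinian {M : monoid} (X : ract M) : Prop :=
  forall P : nat -> X -> Prop,
    (forall n, is_subact X (P n)) ->
    (forall n x, P (S n) x -> P n x) ->
    exists N, forall n, N <= n -> forall x, P n x <-> P N x.

Definition rees_noetherian {M : monoid} (X : ract M) : Prop :=
  forall P : nat -> X -> Prop,
    (forall n, is_subact X (P n)) ->
    (forall n x, P n x -> P (S n) x) ->
    exists N, forall n, N <= n -> forall x, P n x <-> P N x.

Definition rees_ses {M : monoid} (A B C : ract M) (f : A -> B) (g : B -> C) : Prop :=
  is_hom A B f /\ is_hom B C g /\
  (forall a a', f a = f a' -> a = a') /\
  (forall c, exists b, g b = c) /\
  (forall b b', g b = g b' <->
     (((exists a, f a = b) /\ (exists a', f a' = b')) \/ b = b')).

(* Main.v *)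
Require Import Defs.
From Stdlib Require Import Lia PeanoNat.

Lemma mono_dec (P : nat -> Prop) : (forall n, P (S n) -> P n) ->
  forall m n, m <= n -> P n -> P m.
Proof. intros H m n Hle; induction Hle; auto. Qed.

Lemma mono_inc (P : nat -> Prop) : (forall n, P n -> P (S n)) ->
  forall m n, m <= n -> P m -> P n.
Proof. intros H m n Hle; induction Hle; auto. Qed.

Section X.
Context {M : monoid} {A B C : ract M} (f : A -> B) (g : B -> C).

Definition liftA (r : A -> A -> Prop) : B -> B -> Prop := fun b b' =>
  (exists a a', f a = b /\ f a' = b' /\ r a a') \/ b = b'.
Definition pullC (s : C -> C -> Prop) : B -> B -> Prop := fun b b' => s (g b) (g b').
Definition resA (r : B -> B -> Prop) : A -> A -> Prop := fun a a' => r (f a) (f a').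
Definition tau (r : B -> B -> Prop) : B -> B -> Prop := fun b b' =>
  r b b' \/ exists a a', r b (f a) /\ r b' (f a').
Definition pushC (t : B -> B -> Prop) : C -> C -> Prop := fun c c' =>
  exists b b', g b = c /\ g b' = c' /\ t b b'.

Definition liftS (P : A -> Prop) : B -> Prop := fun b => exists a, f a = b /\ P a.
Definition pullS (Q : C -> Prop) : B -> Prop := fun b => Q (g b).
Definition resS (P : B -> Prop) : A -> Prop := fun a => P (f a).
Definition pushS (P : B -> Prop) : C -> Prop := fun c => exists b, g b = c /\ P b.

Hypothesis H : rees_ses A B C f g.

Lemma liftA_cong r : is_congruence A r -> is_congruence B (liftA r).
Proof.
  destruct H as [hf [hg [inj [sur ker]]]].
  intros [R [Sy [T Co]]]; unfold liftA; repeat split.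
  - intros; right; auto.
  - intros x y [(a&a'&e1&e2&h)|e]; [left; exists a', a; auto | right; auto].
  - intros x y z [(a&a'&e1&e2&h)|e] [(b&b'&e3&e4&h')|e'].
    + left; exists a, b'; repeat split; auto. subst.
      assert (a' = b) by (apply inj; auto). subst; eauto.
    + subst. left; eauto.
    + subst. left; eauto.
    + right; congruence.
  - intros x y s [(a&a'&e1&e2&h)|e].
    + left; exists (aact A a s), (aact A a' s); subst; rewrite !hf; auto.
    + right; subst; auto.
Qed.

Lemma liftA_f r : is_congruence A r -> forall a a', liftA r (f a) (f a') <-> r a a'.
Proof.
  destruct H as [hf [hg [inj [sur ker]]]].
  intros [R _] a a'; unfold liftA; split.
  - intros [(x&x'&e1&e2&h)|e].
    + apply inj in e1; apply inj in e2; subst; auto.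
    + apply inj in e; subst; auto.
  - intros h; left; eauto.
Qed.

Lemma pullC_cong s : is_congruence C s -> is_congruence B (pullC s).
Proof.
  destruct H as [hf [hg [inj [sur ker]]]].
  intros [R [Sy [T Co]]]; unfold pullC; repeat split; eauto.
  intros x y t h; rewrite !hg; auto.
Qed.

Lemma resA_cong r : is_congruence B r -> is_congruence A (resA r).
Proof.
  destruct H as [hf [hg [inj [sur ker]]]].
  intros [R [Sy [T Co]]]; unfold resA; repeat split; eauto.
  intros x y t h; rewrite !hf; auto.
Qed.

Lemma tau_cong r : is_congruence B r -> is_congruence B (tau r).
Proof.
  destruct H as [hf [hg [inj [sur ker]]]].
  intros [R [Sy [T Co]]]; unfold tau; repeat split.
  - intros; left; auto.
  - intros x y [h|(a&a'&h1&h2)]; [left; auto| right; eauto].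
  - intros x y z [h|(a&a'&h1&h2)] [h'|(b&b'&h3&h4)].
    + left; eauto.
    + right; exists b, b'; split; eauto.
    + right; exists a, a'; split; eauto.
    + right; exists a, b'; split; eauto.
  - intros x y s [h|(a&a'&h1&h2)].
    + left; auto.
    + right; exists (aact A a s), (aact A a' s); rewrite !hf; split; auto.
Qed.

Lemma tau_sat r : is_congruence B r -> forall b x, g b = g x -> tau r b x.
Proof.
  destruct H as [hf [hg [inj [sur ker]]]].
  intros [R [Sy [T Co]]] b x e. apply ker in e.
  destruct e as [[[a e1] [a' e2]]|e]; subst.
  - right; exists a, a'; auto.
  - left; auto.
Qed.

Lemma pushC_cong r : is_congruence B r -> is_congruence C (pushC (tau r)).
Proof.
  destruct H as [hf [hg [inj [sur ker]]]].
  intros Hr. pose proof (tau_cong r Hr) as [R [Sy [T Co]]].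
  pose proof (tau_sat r Hr) as Sat.
  unfold pushC; repeat split.
  - intros c; destruct (sur c) as [b e]; exists b, b; auto.
  - intros x y (b&b'&e1&e2&h); exists b', b; auto.
  - intros x y z (b&b'&e1&e2&h) (d&d'&e3&e4&h').
    exists b, d'; repeat split; auto.
    apply T with b'; auto. apply T with d; auto. apply Sat; congruence.
  - intros x y s (b&b'&e1&e2&h); exists (aact B b s), (aact B b' s); subst;
      rewrite !hg; auto.
Qed.

Lemma key r r' : is_congruence B r -> is_congruence B r' ->
  (forall x y, r x y -> r' x y) ->
  (forall a a', resA r' a a' -> resA r a a') ->
  (forall c c', pushC (tau r') c c' -> pushC (tau r) c c') ->
  forall x y, r' x y -> r x y.
Proof.
  intros Hr Hr' sub hres hpush x y h.
  pose proof (tau_cong r Hr) as [R [Sy [T Co]]].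
  pose proof (tau_sat r Hr) as Sat.
  assert (ht : tau r x y).
  { destruct (hpush (g x) (g y)) as (b&b'&e1&e2&hb).
    - exists x, y; repeat split; left; auto.
    - apply T with b; [apply Sat; auto|]. apply T with b'; auto; apply Sat; auto. }
  destruct Hr as [R1 [Sy1 [T1 Co1]]].
  destruct Hr' as [R2 [Sy2 [T2 Co2]]].
  destruct ht as [h'|(a&a'&h1&h2)]; auto.
  apply T1 with (f a); auto. apply T1 with (f a'); auto.
  apply hres. unfold resA. apply T2 with x; auto. apply T2 with y; auto.
Qed.

Lemma liftS_sub P : is_subact A P -> is_subact B (liftS P).
Proof.
  destruct H as [hf [hg [inj [sur ker]]]].
  intros hP x s (a&e&p); exists (aact A a s); subst; rewrite hf; auto.
Qed.

Lemma liftS_f P a : liftS P (f a) <-> P a.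
Proof.
  destruct H as [hf [hg [inj [sur ker]]]].
  split; [intros (x&e&p); apply inj in e; subst; auto | intros; exists a; auto].
Qed.

Lemma pullS_sub Q : is_subact C Q -> is_subact B (pullS Q).
Proof.
  destruct H as [hf [hg [inj [sur ker]]]].
  intros hQ x s h; unfold pullS; rewrite hg; auto.
Qed.

Lemma resS_sub P : is_subact B P -> is_subact A (resS P).
Proof.
  destruct H as [hf [hg [inj [sur ker]]]].
  intros hP x s h; unfold resS; rewrite hf; auto.
Qed.

Lemma pushS_sub P : is_subact B P -> is_subact C (pushS P).
Proof.
  destruct H as [hf [hg [inj [sur ker]]]].
  intros hP x s (b&e&p); exists (aact B b s); subst; rewrite hg; auto.
Qed.

Lemma keyS (P P' : B -> Prop) :
  (forall a, resS P' a -> resS P a) ->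
  (forall c, pushS P' c -> pushS P c) ->
  forall x, P' x -> P x.
Proof.
  destruct H as [hf [hg [inj [sur ker]]]].
  intros hres hpush x h.
  destruct (hpush (g x)) as (b&e&p); [exists x; auto|].
  apply ker in e. destruct e as [[[a e1] [a' e2]]|e]; subst; auto.
  apply hres; auto.
Qed.

End X.

Theorem mainTheorem5 (S : monoid) (A B C : ract S) (f : A -> B) (g : B -> C) :
  rees_ses A B C f g ->
  (artinian B <-> artinian A /\ artinian C) /\
  (noetherian B <-> noetherian A /\ noetherian C) /\
  (rees_artinian B <-> rees_artinian A /\ rees_artinian C) /\
  (rees_noetherian B <-> rees_noetherian A /\ rees_noetherian C).
Proof.
  intros H.
  pose proof H as [hf [hg [inj [sur ker]]]].
  split; [split; [intros hB; split|]|split; [split; [intros hB; split|]|split; [split; [intros hB; split|]|split; [intros hB; split|]]]].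
  - intros r hc hd.
    destruct (hB (fun n => liftA f (r n))) as [N hN].
    + intros n; apply (liftA_cong f g H); auto.
    + intros n x y [(a&a'&e1&e2&h)|e]; [left; exists a, a'; auto | right; auto].
    + exists N; intros n hn x y. rewrite <- (liftA_f f g H (r n)), <- (liftA_f f g H (r N)); auto.
  - intros r hc hd.
    destruct (hB (fun n => pullC g (r n))) as [N hN].
    + intros n; apply (pullC_cong f g H); auto.
    + intros n x y h; apply hd; auto.
    + exists N; intros n hn x y. destruct (sur x) as [b <-]; destruct (sur y) as [b' <-].
      apply (hN n hn b b').
  - intros [hA hC] r hc hd.
    destruct (hA (fun n => resA f (r n))) as [N1 h1].
    + intros n; apply (resA_cong f g H); auto.
    + intros n x y h; apply hd; auto.
    + destruct (hC (fun n => pushC g (tau f (r n)))) as [N2 h2].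
      * intros n; apply (pushC_cong f g H); auto.
      * intros n x y (b&b'&e1&e2&[h|(a&a'&h3&h4)]); exists b, b'; repeat split; auto;
          [left; auto | right; exists a, a'; auto].
      * exists (max N1 N2); intros n hn x y; split.
        -- intros h. apply (mono_dec (fun k => r k x y)) with n; auto; lia.
        -- apply (key f g H); auto.
           ++ intros u v h. apply (mono_dec (fun k => r k u v)) with n; auto; lia.
           ++ intros a a' h. apply (h1 n ltac:(lia)). apply (h1 (max N1 N2) ltac:(lia)); auto.
           ++ intros c c' h. apply (h2 n ltac:(lia)). apply (h2 (max N1 N2) ltac:(lia)); auto.
  - intros r hc hd.
    destruct (hB (fun n => liftA f (r n))) as [N hN].
    + intros n; apply (liftA_cong f g H); auto.
    + intros n x y [(a&a'&e1&e2&h)|e]; [left; exists a, a'; auto | right; auto].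
    + exists N; intros n hn x y. rewrite <- (liftA_f f g H (r n)), <- (liftA_f f g H (r N)); auto.
  - intros r hc hd.
    destruct (hB (fun n => pullC g (r n))) as [N hN].
    + intros n; apply (pullC_cong f g H); auto.
    + intros n x y h; apply hd; auto.
    + exists N; intros n hn x y. destruct (sur x) as [b <-]; destruct (sur y) as [b' <-].
      apply (hN n hn b b').
  - intros [hA hC] r hc hd.
    destruct (hA (fun n => resA f (r n))) as [N1 h1].
    + intros n; apply (resA_cong f g H); auto.
    + intros n x y h; apply hd; auto.
    + destruct (hC (fun n => pushC g (tau f (r n)))) as [N2 h2].
      * intros n; apply (pushC_cong f g H); auto.
      * intros n x y (b&b'&e1&e2&[h|(a&a'&h3&h4)]); exists b, b'; repeat split; auto;
          [left; auto | right; exists a, a'; auto].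
      * exists (max N1 N2); intros n hn x y; split.
        -- apply (key f g H); auto.
           ++ intros u v h. apply (mono_inc (fun k => r k u v)) with (max N1 N2); auto; lia.
           ++ intros a a' h. apply (h1 (max N1 N2) ltac:(lia)). apply (h1 n ltac:(lia)); auto.
           ++ intros c c' h. apply (h2 (max N1 N2) ltac:(lia)). apply (h2 n ltac:(lia)); auto.
        -- intros h. apply (mono_inc (fun k => r k x y)) with (max N1 N2); auto; lia.
  - intros P hc hd.
    destruct (hB (fun n => liftS f (P n))) as [N hN].
    + intros n; apply (liftS_sub f g H); auto.
    + intros n x (a&e&p); exists a; auto.
    + exists N; intros n hn x. rewrite <- (liftS_f f g H (P n)), <- (liftS_f f g H (P N)); auto.
  - intros P hc hd.
    destruct (hB (fun n => pullS g (P n))) as [N hN].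
    + intros n; apply (pullS_sub f g H); auto.
    + intros n x h; apply hd; auto.
    + exists N; intros n hn x. destruct (sur x) as [b <-]. apply (hN n hn b).
  - intros [hA hC] P hc hd.
    destruct (hA (fun n => resS f (P n))) as [N1 h1].
    + intros n; apply (resS_sub f g H); auto.
    + intros n x h; apply hd; auto.
    + destruct (hC (fun n => pushS g (P n))) as [N2 h2].
      * intros n; apply (pushS_sub f g H); auto.
      * intros n x (b&e&p); exists b; auto.
      * exists (max N1 N2); intros n hn x; split.
        -- intros h. apply (mono_dec (fun k => P k x)) with n; auto; lia.
        -- apply (keyS f g H).
           ++ intros a h. apply (h1 n ltac:(lia)). apply (h1 (max N1 N2) ltac:(lia)); auto.
           ++ intros c h. apply (h2 n ltac:(lia)). apply (h2 (max N1 N2) ltac:(lia)); auto.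
  - intros P hc hd.
    destruct (hB (fun n => liftS f (P n))) as [N hN].
    + intros n; apply (liftS_sub f g H); auto.
    + intros n x (a&e&p); exists a; auto.
    + exists N; intros n hn x. rewrite <- (liftS_f f g H (P n)), <- (liftS_f f g H (P N)); auto.
  - intros P hc hd.
    destruct (hB (fun n => pullS g (P n))) as [N hN].
    + intros n; apply (pullS_sub f g H); auto.
    + intros n x h; apply hd; auto.
    + exists N; intros n hn x. destruct (sur x) as [b <-]. apply (hN n hn b).
  - intros [hA hC] P hc hd.
    destruct (hA (fun n => resS f (P n))) as [N1 h1].
    + intros n; apply (resS_sub f g H); auto.
    + intros n x h; apply hd; auto.
    + destruct (hC (fun n => pushS g (P n))) as [N2 h2].
      * intros n; apply (pushS_sub f g H); auto.
      * intros n x (b&e&p); exists b; auto.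
      * exists (max N1 N2); intros n hn x; split.
        -- apply (keyS f g H).
           ++ intros a h. apply (h1 (max N1 N2) ltac:(lia)). apply (h1 n ltac:(lia)); auto.
           ++ intros c h. apply (h2 (max N1 N2) ltac:(lia)). apply (h2 n ltac:(lia)); auto.
        -- intros h. apply (mono_inc (fun k => P k x)) with (max N1 N2); auto; lia.
Qed.
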